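(* Let $\Lambda$ be a row-finite $k$-graph with no sources. Suppose that we have a $\Lambda$-projective system on a measure space $(X, \mu)$ with coding maps $\{\tau^n\}_{n\in\mathbb{N}^k}$, and let $\{T_\lambda:\lambda\in\Lambda\}$ be the associated representation of $C^*(\Lambda)$ on $L^2(X, \mu)$. If the representation $\{T_\lambda:\lambda\in\Lambda\}$ is irreducible, then the coding maps $\{\tau^n\}_{n\in\mathbb{N}^k}$ are jointly ergodic with respect to $\mu$.
   Context: A $k$-graph is a countable small category $\Lambda$ with a functor $d:\Lambda\to\mathbb{N}^k$ with unique factorization ($d(\lambda)=m+n$ implies unique $\lambda=\mu\nu$, $d(\mu)=m$, $d(\nu)=n$); vertices $\Lambda^0$ are identity morphisms, $r,s$ range/source, $v\Lambda^n=\{\lambda: r(\lambda)=v, d(\lambda)=n\}$. Row-finite: $v\Lambda^n$ finite; no sources: $v\Lambda^n\ne\emptyset$. $C^*(\Lambda)$: universal $C^*$-algebra generated by partial isometries $s_\lambda$ with $\{s_v\}$ mutually orthogonal projections, $s_\lambda s_\eta=s_{\lambda\eta}$ when $s(\lambda)=r(\eta)$, $s_\lambda^*s_\lambda=s_{s(\lambda)}$, $s_v=\sum_{\lambda\in v\Lambda^n}s_\lambda s_\lambda^*$. A semibranching function system on $(X,\mu)$: measurable $D_i$ ($0<\mu(D_i)<\infty$), measurable $\sigma_i:D_i\to X$ with $R_i=\sigma_i(D_i)$ satisfying $\mu(X\setminus\bigcup R_i)=0$, $\mu(R_i\cap R_j)=0$ for $i\neq j$, $\mu(R_i)<\infty$,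 and $d(\mu\circ\sigma_i)/d\mu>0$ a.e. on $D_i$; coding map $\sigma$ with $\sigma\circ\sigma_i=\mathrm{id}_{D_i}$. A $\Lambda$-semibranching function system: sets $D_\lambda$, maps $\tau_\lambda: D_\lambda\to X$, $\tau^m:X\to X$, such that $\{\tau_\lambda:d(\lambda)=m\}$ is a semibranching function system with coding map $\tau^m$ for each $m$; $\tau_v=\mathrm{id}$; $R_\lambda=\tau_\lambda(D_\lambda)$, $R_\nu\subseteq D_\lambda$ a.e. and $\tau_\lambda\tau_\nu=\tau_{\lambda\nu}$ a.e. for $\nu\in s(\lambda)\Lambda$; $\tau^m\tau^n=\tau^{m+n}$. A $\Lambda$-projective system adds functions $f_\lambda\in L^2(X,\mu)$ with $0\ne d(\mu\circ\tau_\lambda^{-1})/d\mu=|f_\lambda|^2$ and $f_\lambda(f_\nu\circ\tau^{d(\lambda)})=f_{\lambda\nu}$; the associated representation is $T_\lambda f=f_\lambda\cdot(f\circ\tau^{d(\lambda)})$. A family of maps $\{T_i\}$ on $X$ is jointly ergodic with respect to $\mu$ if whenever $A$ is measurable with $\mu(A\,\Delta\, T_i^{-1}(A))=0$ for all $i$, then $\mu(A)=0$ or $\mu(X\setminus A)=0$. *)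

(* Defs.v *)
From HB Require Import structures.
From mathcomp Require Import all_boot all_order all_algebra.
From mathcomp Require Import all_classical all_reals all_analysis.
From mathcomp Require Import measurable_realfun lebesgue_integral.
From mathcomp Require Import complex.

Set Implicit Arguments.
Unset Strict Implicit.
Unset Printing Implicit Defensive.

Import Order.TTheory GRing.Theory Num.Theory.
Local Open Scope classical_set_scope.
Local Open Scope ring_scope.

Definition Nk (k : nat) := 'I_k -> nat.
Definition Nk_add (k : nat) (m n : Nk k) : Nk k := fun i => (m i + n i)%N.
Definition Nk_zero (k : nat) : Nk k := fun _ => 0%N.

(* A k-graph: a countable small category, presented through its morphisms
   (objects = identity morphisms), with source [ks], range [kr], composition
   [kcomp l m] (= l m, meaningful when ks l = kr m) and a degree functor
   [kdeg] to N^k having the unique factorization property. *)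
Record kgraph (k : nat) := KGraph {
  kmor :> Type;
  ks : kmor -> kmor;
  kr : kmor -> kmor;
  kcomp : kmor -> kmor -> kmor;
  kdeg : kmor -> Nk k;
  kg_countable : exists c : kmor -> nat, injective c;
  kg_rr : forall l, kr (kr l) = kr l;
  kg_sr : forall l, ks (kr l) = kr l;
  kg_rs : forall l, kr (ks l) = ks l;
  kg_ss : forall l, ks (ks l) = ks l;
  kg_comp_r : forall l m, ks l = kr m -> kr (kcomp l m) = kr l;
  kg_comp_s : forall l m, ks l = kr m -> ks (kcomp l m) = ks m;
  kg_assoc : forall l m n, ks l = kr m -> ks m = kr n ->
    kcomp (kcomp l m) n = kcomp l (kcomp m n);
  kg_id_r : forall l, kcomp l (ks l) = l;
  kg_id_l : forall l, kcomp (kr l) l = l;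
  kg_deg_id : forall l, kdeg (kr l) = @Nk_zero k;
  kg_deg_comp : forall l m, ks l = kr m ->
    kdeg (kcomp l m) = Nk_add (kdeg l) (kdeg m);
  kg_factor : forall l (m n : Nk k), kdeg l = Nk_add m n ->
    exists! p : kmor * kmor,
      [/\ ks p.1 = kr p.2, l = kcomp p.1 p.2, kdeg p.1 = m & kdeg p.2 = n]
}.

Arguments ks {k} _ _.
Arguments kr {k} _ _.
Arguments kcomp {k} _ _ _.
Arguments kdeg {k} _ _.

Definition is_vertex (k : nat) (L : kgraph k) (v : L) := kr L v = v.

Definition vLn (k : nat) (L : kgraph k) (v : L) (n : Nk k) : set L :=
  [set l | kr L l = v /\ kdeg L l = n].

Definition row_finite (k : nat) (L : kgraph k) :=
  forall (v : L) (n : Nk k), is_vertex v -> finite_set (vLn v n).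

Definition no_sources (k : nat) (L : kgraph k) :=
  forall (v : L) (n : Nk k), is_vertex v -> vLn v n !=set0.

Section Measure.
Context (d : measure_display) (X : measurableType d) (R : realType).
Variable mu : {measure set X -> \bar R}.

Local Open Scope ereal_scope.

Definition image_measurable (D : set X) (g : X -> X) :=
  forall A, measurable A -> A `<=` D -> measurable (g @` A).

Definition RN_deriv (nu : set X -> \bar R) (D : set X) (Phi : X -> \bar R) :=
  [/\ measurable_fun D Phi, (forall x, D x -> 0 <= Phi x) &
      forall A, measurable A -> A `<=` D -> nu A = \int[mu]_(x in A) Phi x].

Record sbfs (I : Type) (D : I -> set X) (sig : I -> X -> X) (c : X -> X)
  : Prop := SBFS {
  sbfs_D_meas : forall i, measurable (D i);
  sbfs_D_pos : forall i, 0 < mu (D i);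
  sbfs_D_fin : forall i, mu (D i) < +oo;
  sbfs_sig_meas : forall i, measurable_fun (D i) (sig i);
  sbfs_sig_img : forall i, image_measurable (D i) (sig i);
  sbfs_cover : mu (~` \bigcup_i (sig i @` D i)) = 0;
  sbfs_disj : forall i j, i <> j -> mu ((sig i @` D i) `&` (sig j @` D j)) = 0;
  sbfs_R_fin : forall i, mu (sig i @` D i) < +oo;
  sbfs_RN : forall i, exists Phi,
      RN_deriv (fun A => mu (sig i @` A)) (D i) Phi /\
      {ae mu, forall x, D i x -> 0 < Phi x};
  sbfs_code_meas : measurable_fun setT c;
  sbfs_code : forall i x, D i x -> c (sig i x) = x
}.

Definition cre (z : R[i]) : R := let: Complex a _ := z in a.
Definition cim (z : R[i]) : R := let: Complex _ b := z in b.
Definition csq (z : R[i]) : R := (cre z ^+ 2 + cim z ^+ 2)%R.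

Definition cmeasurable (f : X -> R[i]) :=
  measurable_fun setT (fun x => cre (f x)) /\
  measurable_fun setT (fun x => cim (f x)).

Definition L2 (f : X -> R[i]) :=
  cmeasurable f /\ \int[mu]_x (csq (f x))%:E < +oo.

Definition ae_eq (f g : X -> R[i]) := {ae mu, forall x, f x = g x}.

Definition cinner (f g : X -> R[i]) : R[i] :=
  Complex (Rintegral mu setT (fun x => cre (f x * conjc (g x))%R))
          (Rintegral mu setT (fun x => cim (f x * conjc (g x))%R)).

(* closed subspaces of L^2(X, mu) (as sets of functions, saturated for a.e.
   equality) *)
Record closed_subspace (V : set (X -> R[i])) : Prop := ClosedSubspace {
  cs_L2 : V `<=` L2;
  cs_ae : forall f g, V f -> L2 g -> ae_eq f g -> V g;
  cs_0 : V (fun _ => 0%R);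
  cs_add : forall f g, V f -> V g -> V (fun x => f x + g x)%R;
  cs_scale : forall (a : R[i]) f, V f -> V (fun x => a * f x)%R;
  cs_closed : forall (F : nat -> X -> R[i]) g, (forall n, V (F n)) -> L2 g ->
      (fun n => \int[mu]_x (csq (F n x - g x)%R)%:E) @ \oo --> 0 -> V g
}.

Definition invariant (V : set (X -> R[i])) (T : (X -> R[i]) -> X -> R[i]) :=
  forall f, V f -> V (T f).

(* V is invariant under the adjoint T^* : for every g in V, T^* g lies in V,
   T^* g being the h with <T f, g> = <f, h> for all f in L^2 *)
Definition adj_invariant (V : set (X -> R[i])) (T : (X -> R[i]) -> X -> R[i]) :=
  forall g, V g -> exists2 h, V h & forall f, L2 f -> cinner (T f) g = cinner f h.

Definition irreducible (Lam : Type) (T : Lam -> (X -> R[i]) -> X -> R[i]) :=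
  forall V, closed_subspace V ->
    (forall l, invariant V (T l) /\ adj_invariant V (T l)) ->
    (forall f, V f -> ae_eq f (fun _ => 0%R)) \/ (forall f, L2 f -> V f).

Definition jointly_ergodic (J : Type) (t : J -> X -> X) :=
  forall A, measurable A ->
    (forall j, mu ((A `\` t j @^-1` A) `|` (t j @^-1` A `\` A)) = 0) ->
    mu A = 0 \/ mu (~` A) = 0.

Record Lsbfs (k : nat) (L : kgraph k) (D : L -> set X) (tau : L -> X -> X)
  (code : Nk k -> X -> X) : Prop := LSBFS {
  Lsbfs_sbfs : forall m : Nk k,
    @sbfs {l : L | kdeg L l = m} (fun l => D (sval l)) (fun l => tau (sval l))
      (code m);
  Lsbfs_vertex : forall (v : L) x, is_vertex v -> D v x -> tau v x = x;
  Lsbfs_range : forall l n : L, ks L l = kr L n ->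
    mu ((tau n @` D n) `\` D l) = 0;
  (* tau_l tau_n = tau_{l n} a.e., as partial maps *)
  Lsbfs_dom : forall l n : L, ks L l = kr L n ->
    {ae mu, forall x, D (kcomp L l n) x <-> D n x};
  Lsbfs_comp : forall l n : L, ks L l = kr L n ->
    {ae mu, forall x, D n x -> tau l (tau n x) = tau (kcomp L l n) x};
  Lsbfs_code : forall m n : Nk k, code m \o code n = code (Nk_add m n)
}.

Record Lprojective (k : nat) (L : kgraph k) (D : L -> set X)
  (tau : L -> X -> X) (code : Nk k -> X -> X) (f : L -> X -> R[i]) : Prop :=
  LPROJ {
  Lproj_sbfs : Lsbfs D tau code;
  Lproj_L2 : forall l, L2 (f l);
  Lproj_nonzero : forall l, ~ ae_eq (f l) (fun _ => 0%R);
  Lproj_RN : forall l, exists Phi,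
    RN_deriv (fun A => mu (tau l @^-1` A `&` D l)) setT Phi /\
    {ae mu, forall x, Phi x = (csq (f l x))%:E};
  Lproj_mult : forall l n : L, ks L l = kr L n ->
    ae_eq (fun x => f l x * f n (code (kdeg L l) x))%R (f (kcomp L l n))
}.

End Measure.

Definition proj_rep (k : nat) (L : kgraph k) (X : Type) (R : rcfType)
  (code : Nk k -> X -> X) (f : L -> X -> R[i]) (l : L) (g : X -> R[i]) :
  X -> R[i] := fun x => (f l x * g (code (kdeg L l) x))%R.

(* Main.v *)
Require Import Defs.
From HB Require Import structures.
From mathcomp Require Import all_boot all_order all_algebra.
From mathcomp Require Import all_classical all_reals all_analysis.
From mathcomp Require Import measurable_realfun lebesgue_integral.
From mathcomp Require Import complex.
From mathcomp Require Import ring lra.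
Import Defs.

Set Implicit Arguments.
Unset Strict Implicit.
Unset Printing Implicit Defensive.
Import Order.TTheory GRing.Theory Num.Theory.
Import numFieldNormedType.Exports.
Local Open Scope classical_set_scope.
Local Open Scope ring_scope.

Lemma measurable_inv (R : realType) : measurable_fun setT (@GRing.inv R).
Proof.
have -> : [set: R] = [set x : R | x != 0] `|` [set 0].
  by apply/seteqP; split => x //= _; case: (eqVneq x 0) => x0; [right|left].
have m0 : measurable [set x : R | x != 0].
  rewrite (_ : [set x : R | x != 0] = ~` [set 0]); first exact: measurableC.
  by apply/seteqP; split => x /= /eqP.
apply/measurable_funU => //; split; last exact: measurable_fun_set1.
apply: subspace_continuous_measurable_fun => //.
have H : {in [set x : R | x != 0], continuous (@GRing.inv R)}.
  by move=> x /set_mem x0; exact: inv_continuous.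
exact: continuous_in_subspaceT H.
Qed.

Section cplx.
Local Open Scope complex_scope.
Variable R : realType.
Implicit Types a b z : R[i].

Lemma creM a b : cre (a * b) = cre a * cre b - cim a * cim b.
Proof. by case: a => ? ?; case: b. Qed.
Lemma cimM a b : cim (a * b) = cre a * cim b + cim a * cre b.
Proof. by case: a => ? ?; case: b => ? ? /=; rewrite addrC. Qed.
Lemma creD a b : cre (a + b) = cre a + cre b.
Proof. by case: a => ? ?; case: b. Qed.
Lemma cimD a b : cim (a + b) = cim a + cim b.
Proof. by case: a => ? ?; case: b. Qed.
Lemma creJ a : cre (conjc a) = cre a. Proof. by case: a. Qed.
Lemma cimJ a : cim (conjc a) = - cim a. Proof. by case: a. Qed.
Lemma creR (r : R) a : cre (r%:C * a) = r * cre a.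
Proof. by case: a => ? ? /=; rewrite mul0r subr0. Qed.
Lemma cimR (r : R) a : cim (r%:C * a) = r * cim a.
Proof. by case: a => ? ? /=; rewrite mul0r addr0. Qed.
Lemma cre0 : cre (0 : R[i]) = 0. Proof. by []. Qed.
Lemma cim0 : cim (0 : R[i]) = 0. Proof. by []. Qed.
Lemma csq_ge0 z : 0 <= csq z.
Proof. by rewrite /csq addr_ge0 ?sqr_ge0. Qed.
Lemma csqM a b : csq (a * b) = csq a * csq b.
Proof. rewrite /csq creM cimM; by case: a => x y; case: b => u v /=; ring. Qed.
Lemma csqJ a : csq (conjc a) = csq a.
Proof. by rewrite /csq creJ cimJ sqrrN. Qed.
Lemma csqR (r : R) a : csq (r%:C * a) = r ^+ 2 * csq a.
Proof. by rewrite /csq creR cimR !exprMn mulrDr. Qed.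
Lemma csq_eq0 z : csq z = 0 -> z = 0.
Proof.
case: z => x y; rewrite /csq /= => /eqP; rewrite paddr_eq0 ?sqr_ge0//.
by rewrite !sqrf_eq0 => /andP[/eqP -> /eqP ->].
Qed.
Lemma csq0 : csq (0 : R[i]) = 0. Proof. by rewrite /csq /= expr0n /= addr0. Qed.
Lemma mulJ a : a * conjc a = (csq a)%:C.
Proof. case: a => x y; rewrite /csq /=; congr Complex; ring. Qed.
Lemma csqD_le a b : csq (a + b) <= 2 * (csq a + csq b).
Proof.
rewrite /csq creD cimD; case: a => x y; case: b => u v /=.
rewrite -subr_ge0.
have -> : 2 * (x ^+ 2 + y ^+ 2 + (u ^+ 2 + v ^+ 2)) - ((x + u) ^+ 2 + (y + v) ^+ 2)
  = (x - u) ^+ 2 + (y - v) ^+ 2 by ring.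
by rewrite addr_ge0 ?sqr_ge0.
Qed.
Lemma conjcM' a b : conjc (a * b) = conjc a * conjc b.
Proof. by case: a => x y; case: b => u v /=; congr Complex; ring. Qed.
Lemma conjc0' : conjc (0 : R[i]) = 0.
Proof. by rewrite /= oppr0. Qed.
End cplx.

Section L2facts.
Local Open Scope complex_scope.
Context d (X : measurableType d) (R : realType) (mu : {measure set X -> \bar R}).
Implicit Types f g : X -> R[i].

Lemma csq_meas f : cmeasurable f -> measurable_fun setT (fun x => csq (f x)).
Proof. by case=> h1 h2; apply: measurable_funD; apply: measurable_funX. Qed.

Lemma cmeasM f g : cmeasurable f -> cmeasurable g ->
  cmeasurable (fun x => f x * g x).
Proof.
case=> f1 f2 [g1 g2]; split.
- under eq_fun do rewrite creM.
  by apply: measurable_funB; apply: measurable_funM.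
- under eq_fun do rewrite cimM.
  by apply: measurable_funD; apply: measurable_funM.
Qed.

Lemma cmeasD f g : cmeasurable f -> cmeasurable g ->
  cmeasurable (fun x => f x + g x).
Proof.
case=> f1 f2 [g1 g2]; split.
- by under eq_fun do rewrite creD; apply: measurable_funD.
- by under eq_fun do rewrite cimD; apply: measurable_funD.
Qed.

Lemma cmeasJ f : cmeasurable f -> cmeasurable (fun x => conjc (f x)).
Proof.
case=> f1 f2; split; first by under eq_fun do rewrite creJ.
by under eq_fun do rewrite cimJ; apply: measurable_funN.
Qed.

Lemma cmeas_cst (a : R[i]) : cmeasurable (fun _ : X => a).
Proof. by split. Qed.

Lemma cmeasR (r : X -> R) : measurable_fun setT r -> cmeasurable (fun x => (r x)%:C).
Proof. by move=> mr; split => //=. Qed.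

Lemma cmeas_comp f (c : X -> X) : measurable_fun setT c -> cmeasurable f ->
  cmeasurable (fun x => f (c x)).
Proof.
move=> mc [f1 f2]; split.
- exact: (measurableT_comp f1 mc).
- exact: (measurableT_comp f2 mc).
Qed.

Local Open Scope ereal_scope.

Lemma L2_0 : L2 mu (fun _ : X => (0%R : R[i])).
Proof.
split; first exact: cmeas_cst.
by rewrite (eq_integral (cst 0)) ?integral0// => x _; rewrite csq0.
Qed.

Lemma L2_add f g : L2 mu f -> L2 mu g -> L2 mu (fun x => (f x + g x)%R).
Proof.
case=> mf If [mg Ig]; split; first exact: cmeasD.
apply: (@le_lt_trans _ _ (\int[mu]_x ((2 * (csq (f x) + csq (g x)))%R)%:E)).
  apply: ge0_le_integral => //.
  - by move=> x _; rewrite lee_fin csq_ge0.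
  - exact/measurable_EFinP/csq_meas/cmeasD.
  - apply/measurable_EFinP/measurable_funM => //.
    by apply: measurable_funD; apply: csq_meas.
  - by move=> x _; rewrite lee_fin csqD_le.
under eq_integral do rewrite EFinM EFinD.
rewrite ge0_integralZl//.
all: try by move=> x _; rewrite lee_fin addr_ge0// csq_ge0.
all: try by rewrite lee_fin addr_ge0.
under eq_integral do rewrite EFinD.
rewrite ge0_integralD//; last 4 first.
- by move=> x _; rewrite lee_fin csq_ge0.
- exact/measurable_EFinP/csq_meas.
- by move=> x _; rewrite lee_fin csq_ge0.
- exact/measurable_EFinP/csq_meas.
by rewrite lte_mul_pinfty// ?lee_fin// lte_add_pinfty.
by apply/measurable_EFinP; apply: measurable_funD; apply: csq_meas.
Qed.

Lemma L2_scale (a : R[i]) f : L2 mu f -> L2 mu (fun x => (a * f x)%R).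
Proof.
case=> mf If; split; first by apply: cmeasM => //; exact: cmeas_cst.
under eq_integral do rewrite csqM EFinM.
rewrite ge0_integralZl//; last 3 first.
- exact/measurable_EFinP/csq_meas.
- by move=> x _; rewrite lee_fin csq_ge0.
- by rewrite lee_fin csq_ge0.
by rewrite lte_mul_pinfty// lee_fin csq_ge0.
Qed.

End L2facts.

Section CV.
Local Open Scope ereal_scope.
Context d (X : measurableType d) (R : realType) (mu : {measure set X -> \bar R}).
Variables (D : set X) (mD : measurable D) (t : X -> X) (mt : measurable_fun D t)
  (q : X -> R) (q0 : forall x, (0 <= q x)%R) (mq : measurable_fun setT q).
Hypothesis hq : forall B, measurable B ->
  mu (t @^-1` B `&` D) = \int[mu]_(x in B) (q x)%:E.

Import HBNNSimple.

Lemma cv_nnsfun (h : {nnsfun X >-> R}) :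
  \int[mu]_x ((h x)%:E * (q x)%:E) = \int[mu]_(y in D) (h (t y))%:E.
Proof.
have mS r : measurable (h @^-1` [set r]).
  by rewrite -(setTI (_ @^-1` _)); exact: measurable_funP.
have mtS r : measurable (D `&` t @^-1` (h @^-1` [set r])) by exact: mt.
transitivity (\sum_(r \in range h) r%:E * mu (t @^-1` (h @^-1` [set r]) `&` D)).
  have -> : (fun x => (h x)%:E * (q x)%:E) = (fun x => \sum_(r \in range h)
      (r * \1_(h @^-1` [set r]) x)%:E * (q x)%:E).
    apply/funext => x; rewrite fimfunE -fsumEFin// ge0_mule_fsuml//.
    by move=> r; exact: nnfun_muleindic_ge0.
  rewrite ge0_integral_fsum//; last 2 first.
  - move=> r; apply: emeasurable_funM; last exact/measurable_EFinP.
    exact/measurable_EFinP/measurable_funM.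
  - by move=> r x _; rewrite mule_ge0 ?nnfun_muleindic_ge0 ?lee_fin.
  apply: eq_fsbigr => r /[!inE] -[x _ <-].
  under eq_integral do rewrite EFinM -muleA.
  rewrite ge0_integralZl//; last 3 first.
  - apply: emeasurable_funM; exact/measurable_EFinP.
  - by move=> y _; rewrite mule_ge0 ?lee_fin.
  - by rewrite lee_fin.
  congr (_ * _); rewrite hq// [RHS]integral_mkcond; apply: eq_integral => y _.
  by rewrite epatch_indic /= muleC.
transitivity (\sum_(r \in range h) \int[mu]_(y in D) (r * \1_(D `&` t @^-1` (h @^-1` [set r])) y)%:E).
  apply: eq_fsbigr => r /[!inE] -[x _ <-].
  rewrite (@integralZl_indic _ _ _ _ _ mD (fun r => D `&` t @^-1` (h @^-1` [set r])))//; last first.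
    by move=> r0; rewrite preimage_nnfun0// preimage_set0 setI0.
  by rewrite integral_indic// setIAC setIid setIC.
rewrite -ge0_integral_fsum//; last 2 first.
- by move=> r; exact/measurable_EFinP/measurable_funM.
- move=> r y _; rewrite lee_fin indicE.
  case: (boolP (y \in _)) => [/set_mem [_ <-]|_]; rewrite ?mulr1 ?mulr0 //.
apply: eq_integral => y /[!inE] Dy; rewrite fsumEFin// fimfunE; congr EFin.
apply: eq_fsbigr => r _; congr (_ * _)%R; rewrite !indicE; congr (_ : R).
by rewrite in_setI (mem_set Dy).
Qed.


Lemma cv_ge0 (G : X -> \bar R) : measurable_fun setT G -> (forall x, 0 <= G x) ->
  \int[mu]_x (G x * (q x)%:E) = \int[mu]_(y in D) G (t y).
Proof.
move=> mG G0.
pose h := nnsfun_approx measurableT mG.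
have cvh x : EFin \o h^~x @ \oo --> G x.
  by apply: cvg_nnsfun_approx.
transitivity (limn (fun n => \int[mu]_x ((h n x)%:E * (q x)%:E))).
  have GE x : G x * (q x)%:E = limn (fun n => (h n x)%:E * (q x)%:E).
    by apply/esym/cvg_lim => //; apply: cvgeZr => //; exact: cvh.
  under eq_integral do rewrite GE.
  apply: monotone_convergence => //.
  - move=> n; apply: emeasurable_funM; exact/measurable_EFinP.
  - by move=> n x _; rewrite mule_ge0 ?lee_fin.
  - move=> x _ a b ab; rewrite lee_wpmul2r ?lee_fin//.
    exact/lefP/nd_nnsfun_approx.
transitivity (limn (fun n => \int[mu]_(y in D) (h n (t y))%:E)).
  by congr (limn _); apply/funext => n; exact: cv_nnsfun.
have GE y : G (t y) = limn (fun n => (h n (t y))%:E).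
  by apply/esym/cvg_lim => //; exact: cvh.
under [RHS]eq_integral do rewrite GE.
apply/esym; apply: monotone_convergence => //.
- move=> n; apply: measurableT_comp => //; apply: measurableT_comp => //.
- by move=> n x _; rewrite lee_fin.
- by move=> x _ a b ab; rewrite lee_fin; exact/lefP/nd_nnsfun_approx.
Qed.


Lemma cv (G : X -> R) : measurable_fun setT G ->
  \int[mu]_x (G x * q x)%:E = \int[mu]_(y in D) (G (t y))%:E.
Proof.
move=> mG.
have mGE : measurable_fun setT (EFin \o G) by exact/measurable_EFinP.
rewrite integralE [RHS]integralE; congr (_ - _).
- transitivity (\int[mu]_(y in D) (EFin \o G)^\+ (t y)); last first.
    by apply: eq_integral => y _; rewrite !funeposE.
  rewrite -(cv_ge0 (measurable_funepos mGE)); last by move=> x; exact: funepos_ge0.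
  apply: eq_integral => x _; rewrite !funeposE /= EFinM maxe_pMl// ?mul0e//.
  by rewrite lee_fin.
- transitivity (\int[mu]_(y in D) (EFin \o G)^\- (t y)); last first.
    by apply: eq_integral => y _; rewrite !funenegE.
  rewrite -(cv_ge0 (measurable_funeneg mGE)); last by move=> x; exact: funeneg_ge0.
  apply: eq_integral => x _; rewrite !funenegE /= -mulNr EFinM maxe_pMl// ?mul0e//.
  by rewrite lee_fin.
Qed.

End CV.

Section Main.
Context k (L : kgraph k) d (X : measurableType d) (R : realType)
  (mu : {measure set X -> \bar R})
  (D : L -> set X) (tau : L -> X -> X) (code : Nk k -> X -> X)
  (f : L -> X -> R[i]).
Hypothesis HP : Lprojective mu D tau code f.

Let SB m := Lsbfs_sbfs (Lproj_sbfs HP) m.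
Definition idx (l : L) : {l0 : L | kdeg L l0 = kdeg L l} := exist _ l erefl.

Lemma code_meas j : measurable_fun setT (code j).
Proof. exact: sbfs_code_meas (SB j). Qed.
Lemma mD l : measurable (D l).
Proof. exact: (sbfs_D_meas (SB (kdeg L l)) (idx l)). Qed.
Lemma mt l : measurable_fun (D l) (tau l).
Proof. by have /= := sbfs_sig_meas (SB (kdeg L l)) (i:=idx l). Qed.
Lemma hcode l x : D l x -> code (kdeg L l) (tau l x) = x.
Proof. by have /= := sbfs_code (SB (kdeg L l)) (i:=idx l); apply. Qed.
Lemma mq l : measurable_fun setT (fun x => csq (f l x)).
Proof. exact: csq_meas (Lproj_L2 HP l).1. Qed.

Lemma hq l B : measurable B ->
  mu (tau l @^-1` B `&` D l) = (\int[mu]_(x in B) (csq (f l x))%:E)%E.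
Proof.
move=> mB; case: (Lproj_RN HP l) => Phi [[mPhi Phi0 hPhi] aePhi].
rewrite hPhi//; apply: ae_eq_integral => //.
- exact: measurable_funS mPhi.
- exact/measurable_funTS/measurable_EFinP/mq.
- by move: aePhi; apply: filterS => x ->.
Qed.

Lemma cvl l (G : X -> R) : measurable_fun setT G ->
  (\int[mu]_x (G x * csq (f l x))%:E = \int[mu]_(y in D l) (G (tau l y))%:E)%E.
Proof.
move=> mG; have q0 x : 0 <= csq (f l x) by exact: csq_ge0.
have := cv (@mD l) (@mt l) q0 (@mq l) (@hq l) mG; exact.
Qed.


Lemma csqN (z : R[i]) : csq (- z) = csq z.
Proof. by case: z => x y; rewrite /csq /= !sqrrN. Qed.

Lemma cmeasN (g : X -> R[i]) : cmeasurable g -> cmeasurable (fun x => - g x).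
Proof.
have creN (z : R[i]) : cre (- z) = - cre z by case: z.
have cimN (z : R[i]) : cim (- z) = - cim z by case: z.
case=> g1 g2; split.
- by under eq_fun do rewrite creN; apply: measurable_funN.
- by under eq_fun do rewrite cimN; apply: measurable_funN.
Qed.

Lemma T_L2 l g : L2 mu g -> L2 mu (proj_rep code f l g).
Proof.
case=> mg Ig; split.
  apply: cmeasM; first exact: (Lproj_L2 HP l).1.
  exact: cmeas_comp (code_meas _) mg.
rewrite /proj_rep.
have -> : (\int[mu]_x (csq (f l x * g (code (kdeg L l) x)))%:E)%E =
    (\int[mu]_x (csq (g (code (kdeg L l) x)) * csq (f l x))%:E)%E.
  by apply: eq_integral => x _; rewrite csqM mulrC.
rewrite cvl; last exact: measurableT_comp (csq_meas mg) (code_meas _).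
have -> : (\int[mu]_(y in D l) (csq (g (code (kdeg L l) (tau l y))))%:E)%E =
    (\int[mu]_(y in D l) (csq (g y))%:E)%E.
  by apply: eq_integral => y /set_mem Dy; rewrite hcode.
apply: le_lt_trans Ig; apply: ge0_subset_integral => //.
- exact: mD.
- exact/measurable_EFinP/csq_meas.
- by move=> x _; rewrite lee_fin csq_ge0.
Qed.

Variables (A : set X) (mA : measurable A).
Hypothesis Hinv : forall j,
  mu ((A `\` code j @^-1` A) `|` (code j @^-1` A `\` A)) = 0%E.

Lemma mpre j : measurable (code j @^-1` A).
Proof. by rewrite -[Y in measurable Y]setTI; exact: code_meas. Qed.

Lemma null1 j : mu (A `\` code j @^-1` A) = 0%E.
Proof.
apply: (subset_measure0 _ _ _ (Hinv j)).
- exact: measurableD (mpre j).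
- by apply: measurableU; apply: measurableD => //; exact: mpre.
- exact: subsetUl.
Qed.

Lemma null2 j : mu (code j @^-1` A `\` A) = 0%E.
Proof.
apply: (subset_measure0 _ _ _ (Hinv j)).
- exact: measurableD (mpre j) mA.
- by apply: measurableU; apply: measurableD => //; exact: mpre.
- exact: subsetUr.
Qed.

Definition V (g : X -> R[i]) := L2 mu g /\ {ae mu, forall x, ~ A x -> g x = 0}.

Lemma V_closed : closed_subspace mu V.
Proof.
split.
- by move=> g [].
- move=> g h [Lg ag] Lh agh; split => //.
  by move: ag agh; apply: filterS2 => x H1 H2 nA; rewrite -H2 H1.
- by split; [exact: L2_0 | exact: aeW].
- move=> g h [Lg ag] [Lh ah]; split; first exact: L2_add.
  by move: ag ah; apply: filterS2 => x H1 H2 nA; rewrite H1 ?H2 ?addr0.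
- move=> a g [Lg ag]; split; first exact: L2_scale.
  by move: ag; apply: filterS => x H1 nA; rewrite H1 ?mulr0.
- move=> F g VF Lg cvF; split => //.
  have mcA : measurable (~` A) by exact: measurableC.
  have mg := Lg.1.
  set I := (\int[mu]_(x in ~` A) (csq (g x))%:E)%E.
  have I_le n : (I <= \int[mu]_x (csq (F n x - g x))%:E)%E.
    have -> : I = (\int[mu]_(x in ~` A) (csq (F n x - g x))%:E)%E.
      apply: ae_eq_integral => //.
      - exact/measurable_funTS/measurable_EFinP/csq_meas.
      - apply/measurable_funTS/measurable_EFinP/csq_meas/cmeasD.
          exact: (VF n).1.1.
        exact: cmeasN.
      - move: (VF n).2; apply: filterS => x H nA.
        by rewrite H // sub0r csqN.
    apply: ge0_subset_integral => //.
    - apply/measurable_EFinP/csq_meas/cmeasD; first exact: (VF n).1.1.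
      exact: cmeasN.
    - by move=> x _; rewrite lee_fin csq_ge0.
  have I0 : (I <= 0)%E.
    by apply: (cvge_to_ge cvF); apply: nearW => n; exact: I_le.
  have I00 : I = 0%E by apply/eqP; rewrite eq_le I0 integral_ge0// => x _; rewrite lee_fin csq_ge0.
  have : (\int[mu]_(x in ~` A) `|(csq (g x))%:E|)%E = 0%E.
    by rewrite -I00; apply: eq_integral => x _; rewrite gee0_abs// lee_fin csq_ge0.
  have mcsq : measurable_fun (~` A) (fun x => (csq (g x))%:E).
    exact/measurable_funTS/measurable_EFinP/csq_meas.
  move/(ae_eq_integral_abs mu mcA mcsq).
  by apply: filterS => x H nA; apply: csq_eq0; have [] := H nA.
Qed.


Lemma F_null l N : measurable N -> mu N = 0%E ->
  {ae mu, forall x, N (code (kdeg L l) x) -> f l x = 0}.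
Proof.
move=> mN N0; set c := code (kdeg L l).
have mcN : measurable (c @^-1` N).
  by rewrite -[Y in measurable Y]setTI; exact: code_meas.
have H : (\int[mu]_x (\1_(c @^-1` N) x * csq (f l x))%:E = 0)%E.
  rewrite cvl; last exact: measurable_indic.
  transitivity (\int[mu]_(y in D l) (\1_N y)%:E)%E.
    apply: eq_integral => y /set_mem Dy; rewrite !indicE; congr (_ %:R)%:E.
    by rewrite /c -[in RHS](hcode Dy).
  rewrite integral_indic//; last exact: mD.
  apply: (subset_measure0 _ _ _ N0) => //.
  by apply: measurableI => //; exact: mD.
have H2 : (\int[mu]_(x in c @^-1` N) `|(csq (f l x))%:E| = 0)%E.
  rewrite -H integral_mkcond; apply: eq_integral => x _.
  by rewrite epatch_indic /= ger0_norm ?csq_ge0// -EFinM mulrC.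
have mcsq : measurable_fun (c @^-1` N) (fun x => (csq (f l x))%:E).
  exact/measurable_funTS/measurable_EFinP/mq.
move/(ae_eq_integral_abs mu mcN mcsq) : H2.
by apply: filterS => x H3 cN; apply: csq_eq0; have [] := H3 cN.
Qed.

Lemma T_V l g : V g -> V (proj_rep code f l g).
Proof.
case=> Lg ag; split; first exact: T_L2.
set c := code (kdeg L l).
case: ag => N [mN N0 HN].
have F0 := F_null l mN N0.
have aE : {ae mu, forall x, ~ (c @^-1` A `\` A) x}.
  exists (c @^-1` A `\` A); split.
  - by apply: measurableD => //; exact: mpre.
  - exact: null2.
  - by move=> x /= /contrapT.
move: F0 aE; apply: filterS2 => x H1 H2 nA; rewrite /proj_rep -/c.
case: (pselect (A (c x))) => cA; first by exfalso; apply: H2.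
case: (pselect (N (c x))) => cN; first by rewrite H1 // mul0r.
have -> : g (c x) = 0; last by rewrite mulr0.
apply: contrapT => gne; apply: cN; apply: HN => /= H; apply: gne; exact: H.
Qed.


Local Open Scope complex_scope.

Definition Kf l (g : X -> R[i]) (x : X) : R[i] :=
  ((csq (f l x))^-1)%:C * (g x * conjc (f l x)).

Definition hadj l (g : X -> R[i]) (y : X) : R[i] :=
  if y \in D l then Kf l g (tau l y) else 0.

Lemma K_meas l g : cmeasurable g -> cmeasurable (Kf l g).
Proof.
move=> mg; apply: cmeasM.
  exact/cmeasR/(measurableT_comp (@measurable_inv R) (@mq l)).
by apply: cmeasM => //; apply: cmeasJ; exact: (Lproj_L2 HP l).1.
Qed.

Lemma hadj_meas l g : cmeasurable g -> cmeasurable (hadj l g).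
Proof.
move=> mg; have [k1 k2] := K_meas l mg.
have h1 := (measurable_restrictT _ (@mD l)).1 (measurableT_comp k1 (@mt l)).
have h2 := (measurable_restrictT _ (@mD l)).1 (measurableT_comp k2 (@mt l)).
split.
- move: h1; apply: eq_measurable_fun => y _.
  by rewrite /hadj patchE /=; case: ifP.
- move: h2; apply: eq_measurable_fun => y _.
  by rewrite /hadj patchE /=; case: ifP.
Qed.

Lemma csqK l g x : csq (Kf l g x) = csq (g x) * (csq (f l x))^-1.
Proof.
rewrite /Kf csqR csqM csqJ.
have [->|qn0] := eqVneq (csq (f l x)) 0; first by rewrite invr0 expr0n /= !mul0r mulr0.
by rewrite expr2 mulrCA -!mulrA mulVf // mulr1 mulrC.
Qed.


Lemma hadj_L2 l g : L2 mu g -> L2 mu (hadj l g).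
Proof.
case=> mg Ig; split; first exact: hadj_meas.
set G := fun x => csq (g x) * (csq (f l x))^-1.
have mG : measurable_fun setT G.
  apply: measurable_funM; first exact: csq_meas.
  exact: (measurableT_comp (@measurable_inv R) (@mq l)).
have -> : (\int[mu]_x (csq (hadj l g x))%:E = \int[mu]_(y in D l) (G (tau l y))%:E)%E.
  rewrite [RHS]integral_mkcond; apply: eq_integral => y _.
  by rewrite /hadj patchE; case: ifP => _; rewrite ?csqK ?csq0.
rewrite -cvl//; apply: le_lt_trans Ig; apply: ge0_le_integral => //.
- by move=> x _; rewrite lee_fin /G !mulr_ge0 ?invr_ge0 ?csq_ge0.
- apply/measurable_EFinP/measurable_funM => //; exact: mq.
- exact/measurable_EFinP/csq_meas.
- move=> x _; rewrite lee_fin /G -mulrA.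
  have [q0|qn0] := eqVneq (csq (f l x)) 0.
    by rewrite q0 !mulr0 csq_ge0.
  by rewrite mulVf // mulr1.
Qed.

Lemma int_null (M : set X) (q : X -> R) : measurable M -> mu M = 0%E ->
  measurable_fun setT q -> (forall x, 0 <= q x)%R ->
  (\int[mu]_(x in M) (q x)%:E = 0)%E.
Proof.
move=> mM M0 mq0 q0.
rewrite -(integral_abs_eq0 (f := fun x => (q x)%:E) mM _ M0).
  by apply: eq_integral => x _; rewrite gee0_abs // lee_fin.
exact/measurable_funTS/measurable_EFinP.
Qed.

Lemma hadj_V l g : V g -> V (hadj l g).
Proof.
case=> Lg ag; split; first exact: hadj_L2.
set c := code (kdeg L l).
case: ag => N [mN N0 HN].
set E := A `\` c @^-1` A.
have mE : measurable E by apply: measurableD => //; exact: mpre.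
have E0 : mu E = 0%E by exact: null1.
set M := N `|` E.
have mM : measurable M by exact: measurableU.
have M0 : mu M = 0%E.
  apply/negligibleP => //; apply: negligibleU; first by exists N; split.
  exact/negligibleP.
exists (D l `&` tau l @^-1` M); split.
- exact: (@mt l) (@mD l) _ mM.
- rewrite setIC hq //; apply: int_null => //; first exact: mq.
  by move=> x; exact: csq_ge0.
move=> x /= /not_implyP [nA hx].
have Dx : D l x.
  by apply: contrapT => nD; apply: hx; rewrite /hadj memNset.
split => //.
case: (pselect (A (tau l x))) => tA.
  by right; split => //; rewrite /preimage /= /c hcode.
left; apply: contrapT => nN; apply: hx; rewrite /hadj mem_set // /Kf.
have -> : g (tau l x) = 0; last by rewrite mul0r mulr0.
by apply: contrapT => gne; apply: nN; apply: HN => /= H; apply: gne; exact: H.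
Qed.


Lemma hadj_inner_gen l g h (p : R[i] -> R)
  (pR : forall (r : R) z, p (r%:C * z) = (r * p z)%R)
  (pm : forall F : X -> R[i], cmeasurable F -> measurable_fun setT (fun x => p (F x))) :
  cmeasurable g -> cmeasurable h ->
  (\int[mu]_x (p (proj_rep code f l h x * conjc (g x)))%:E =
   \int[mu]_x (p (h x * conjc (hadj l g x)))%:E)%E.
Proof.
move=> mg mh.
have p0 : p 0 = 0%R by have := pR 0%R 0; rewrite mulr0 mul0r.
set c := code (kdeg L l).
set P := fun x => f l x * h (c x) * conjc (g x).
have mP : cmeasurable P.
  apply: cmeasM; last exact: cmeasJ.
  apply: cmeasM; first exact: (Lproj_L2 HP l).1.
  exact: cmeas_comp (code_meas _) mh.
set G := fun x => ((csq (f l x))^-1 * p (P x))%R.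
have mG : measurable_fun setT G.
  apply: measurable_funM; last exact: pm.
  exact: (measurableT_comp (@measurable_inv R) (@mq l)).
transitivity (\int[mu]_x (G x * csq (f l x))%:E)%E.
  apply: eq_integral => x _; rewrite /G /proj_rep -/c -/(P x).
  have [q0|qn0] := eqVneq (csq (f l x)) 0.
    by rewrite q0 !mulr0 /P (csq_eq0 q0) !mul0r p0.
  by rewrite mulrC mulrA mulfV // mul1r.
rewrite cvl // integral_mkcond; apply: eq_integral => y _; rewrite patchE /hadj.
case: ifPn => [/set_mem Dy|nD]; last by rewrite conjc0' mulr0 p0.
rewrite /G /P /c hcode // /Kf !conjcM' conjc_real conjcK.
rewrite mulrCA pR; congr (_ * p _)%:E; ring.
Qed.

Lemma hadj_inner l g h : cmeasurable g -> cmeasurable h ->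
  cinner mu (proj_rep code f l h) g = cinner mu h (hadj l g).
Proof.
move=> mg mh; rewrite /cinner /Rintegral.
rewrite (@hadj_inner_gen l g h _ (@creR R)) //; last by move=> F [].
by rewrite (@hadj_inner_gen l g h _ (@cimR R)) //; move=> F [].
Qed.

Lemma adj_inv l : adj_invariant mu V (proj_rep code f l).
Proof.
move=> g Vg; exists (hadj l g); first exact: hadj_V.
by move=> h Lh; apply: hadj_inner; [exact: Vg.1.1 | exact: Lh.1].
Qed.


Lemma cover_null (B : set X) : measurable B ->
  (forall i : {l0 : L | kdeg L l0 = @Nk_zero k},
     mu (B `&` (tau (sval i) @` D (sval i))) = 0%E) -> mu B = 0%E.
Proof.
move=> mB H.
set S := SB (@Nk_zero k).
set Ri := fun i : {l0 : L | kdeg L l0 = @Nk_zero k} => tau (sval i) @` D (sval i).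
have mR i : measurable (Ri i).
  have := sbfs_sig_img S (i:=i) (sbfs_D_meas S i) (@subset_refl _ _); exact.
have [c cinj] := kg_countable L.
pose cI := fun i : {l0 : L | kdeg L l0 = @Nk_zero k} => c (sval i).
have cIinj : injective cI by move=> [i pi] [j pj] /cinj /= ij; exact: eq_exist.
have cntI : countable [set: {l0 : L | kdeg L l0 = @Nk_zero k}].
  by apply/countable_injP; exists cI => i j _ _; exact: cIinj.
have mU : measurable (\bigcup_i Ri i) by exact: countable_bigcupT_measurable.
have nU : mu.-negligible (~` \bigcup_i Ri i).
  exists (~` \bigcup_i Ri i); split => //; first exact: measurableC.
  exact: (sbfs_cover S).
pose S' := fun n => \bigcup_(i in [set i | cI i = n]) (B `&` Ri i).
have nS' : mu.-negligible (\bigcup_n S' n).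
  apply: negligible_bigcup => n.
  case: (pselect (exists i, cI i = n)) => [[i ci]|ne].
    apply: (@negligibleS _ _ _ _ (B `&` Ri i)).
      move=> x [j /= cj Bj]; have ji : j = i by apply: cIinj; rewrite cj ci.
      by rewrite -ji.
    by apply/negligibleP; [exact: measurableI | exact: H].
  apply: (@negligibleS _ _ _ _ set0); last exact: negligible_set0.
  by move=> x [j /= cj _]; apply: ne; exists j.
apply: measure_negligible => //.
apply: (@negligibleS _ _ _ _ ((~` \bigcup_i Ri i) `|` \bigcup_n S' n)).
  move=> x Bx; case: (pselect ((\bigcup_i Ri i) x)) => [[i _ Rx]|nx]; last by left.
  by right; exists (cI i) => //; exists i.
exact: negligibleU.
Qed.


Definition chi (S : set X) (x : X) : R[i] := ((\1_S x : R)%:C).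

Lemma chi_L2 S : measurable S -> (mu S < +oo)%E -> L2 mu (chi S).
Proof.
move=> mS Sfin; split.
  split; last by [].
  exact: measurable_indic.
have -> : (\int[mu]_x (csq (chi S x))%:E = \int[mu]_x (\1_S x)%:E)%E.
  apply: eq_integral => x _; rewrite /chi /csq /= expr0n /= addr0 indicE.
  by case: (x \in S); rewrite ?expr1n ?expr0n.
by rewrite integral_indic // setIT.
Qed.

Lemma chi_null S (P : set X) : measurable S -> S `<=` P ->
  {ae mu, forall x, P x -> chi S x = 0} -> mu S = 0%E.
Proof.
move=> mS SP [N [mN N0 HN]]; apply: measure_negligible => //.
exists N; split => // x Sx; apply: HN => /= H.
have := H (SP _ Sx); rewrite /chi indicE mem_set // => -[] /eqP.
by rewrite oner_eq0.
Qed.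

Lemma main_ergodic : irreducible mu (proj_rep code f) ->
  mu A = 0%E \/ mu (~` A) = 0%E.
Proof.
move=> Hirr.
have [H0|Hall] := Hirr V V_closed (fun l => conj (T_V l) (adj_inv l)).
- left; apply: cover_null mA _ => i.
  set S := SB (@Nk_zero k).
  have mR : measurable (tau (sval i) @` D (sval i)).
    have := sbfs_sig_img S (i:=i) (sbfs_D_meas S i) (@subset_refl _ _); exact.
  have mAR : measurable (A `&` (tau (sval i) @` D (sval i))) by exact: measurableI.
  have VC : V (chi (A `&` (tau (sval i) @` D (sval i)))).
    split.
      apply: chi_L2 => //; apply: le_lt_trans (sbfs_R_fin S i).
      by apply: le_measure; rewrite ?inE //; exact: subIsetr.
    apply: aeW => x nA; rewrite /chi indicE memNset //; by case.
  apply: (@chi_null _ setT mAR) => //.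
  by move: (H0 _ VC); apply: filterS => x H _; exact: H.
- right; apply: cover_null (measurableC mA) _ => i.
  set S := SB (@Nk_zero k).
  have mR : measurable (tau (sval i) @` D (sval i)).
    have := sbfs_sig_img S (i:=i) (sbfs_D_meas S i) (@subset_refl _ _); exact.
  have mAR : measurable (~` A `&` (tau (sval i) @` D (sval i))).
    by apply: measurableI => //; exact: measurableC.
  have LC : L2 mu (chi (~` A `&` (tau (sval i) @` D (sval i)))).
    apply: chi_L2 => //; apply: le_lt_trans (sbfs_R_fin S i).
    by apply: le_measure; rewrite ?inE //; exact: subIsetr.
  apply: (@chi_null _ (~` A) mAR); first exact: subIsetl.
  exact: (Hall _ LC).2.
Qed.

End Main.

Theorem proposition4p6 (k : nat) (L : kgraph k)
  (d : measure_display) (X : measurableType d) (R : realType)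
  (mu : measure X R)
  (D : L -> set X) (tau : L -> X -> X) (code : Nk k -> X -> X)
  (f : L -> X -> R[i]) :
  row_finite L -> no_sources L ->
  Lprojective mu D tau code f ->
  irreducible mu (proj_rep code f) ->
  jointly_ergodic mu code.
Proof.
move=> _ _ HP Hirr A mA Hinv.
exact: (main_ergodic HP mA Hinv Hirr).
Qed.
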